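(* Fix a cell $c$ and let ${\cal L}_c:\mathbb{R}\times\mathbb{R}^{n_c}\to\mathbb{R}^{n_c}$ be a linear map (the constitutive relation ${\bf u}_c={\cal L}_c(p_c,{\bm\lambda}_c)$ of a mixed-hybrid scheme). Assume ${\cal L}_c$ is linearity preserving: for every affine function $q({\bf x})=a+{\bf g}\cdot{\bf x}$ ($a\in\mathbb{R}$, ${\bf g}\in\mathbb{R}^d$), $$ {\cal L}_c\big(q({\bf x}_c),(q({\bf x}_f))_{f\in\partial c}\big)=\big(-{\bf n}_f\cdot{\mathbb K}_c{\bf g}\big)_{f\in\partial c}. $$ Then: (i) there exists an $n_c\times n_c$ matrix ${\mathsf W}_{{\cal F},c}$ such that ${\cal L}_c(p_c,{\bm\lambda}_c)={\mathsf W}_{{\cal F},c}{\mathsf F}_c\Sigma_c(p_c\mathbb{1}-{\bm\lambda}_c)$ for all $(p_c,{\bm\lambda}_c)$, and ${\mathsf W}_{{\cal F},c}{\mathsf R}_c={\mathsf N}_c$ (i.e. the scheme belongs to the extended mixed-hybrid family); (ii) if moreover the bilinear form ${\cal B}((\tilde p_c,\tilde{\bm\lambda}_c),(p_c,{\bm\lambda}_c)):=(\tilde p_c\mathbb{1}-\tilde{\bm\lambda}_c)^T\Sigma_c{\mathsf F}_c\,{\cal L}_c(p_c,{\bm\lambda}_c)$ is symmetric and satisfies ${\cal B}((p_c,{\bm\lambda}_c),(p_c,{\bm\lambda}_c))>0$ whenever $p_c\mathbb{1}\neq{\bm\lambda}_c$, then ${\mathsf W}_{{\cal F},c}$ is symmetric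 positive definite and ${\mathsf M}_{{\cal F},c}:={\mathsf W}_{{\cal F},c}^{-1}$ is symmetric positive definite with ${\mathsf M}_{{\cal F},c}{\mathsf N}_c={\mathsf R}_c$ (a member of the mimetic family); and if in addition there are constants $0<C_1\le C_2$ with $C_1|c|\,\|{\bf u}\|^2\le{\cal B}((p_c,{\bm\lambda}_c),(p_c,{\bm\lambda}_c))\le C_2|c|\,\|{\bf u}\|^2$ for all $(p_c,{\bm\lambda}_c)$, where ${\bf u}={\cal L}_c(p_c,{\bm\lambda}_c)$ and $\|\cdot\|$ is the Euclidean norm, then $C_1|c|\,\|{\bf v}\|^2\le{\bf v}^T{\mathsf M}_{{\cal F},c}{\bf v}\le C_2|c|\,\|{\bf v}\|^2$ for all ${\bf v}\in\mathbb{R}^{n_c}$.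
   Context: $c\subset\mathbb{R}^d$ ($d=2,3$) is a polygonal/polyhedral cell with $n_c$ flat faces $f$, centroid ${\bf x}_c$, face centroids ${\bf x}_f$, face measures $|f|$, cell measure $|c|$. Each face has a fixed unit normal ${\bf n}_f$; ${\bf n}_{c,f}$ is the exterior unit normal and $\sigma_{c,f}={\bf n}_f\cdot{\bf n}_{c,f}\in\{\pm1\}$. ${\mathbb K}_c$ is a constant symmetric positive definite $d\times d$ tensor. ${\mathsf F}_c=\mathrm{diag}(|f|)_{f\in\partial c}$, $\Sigma_c=\mathrm{diag}(\sigma_{c,f})_{f\in\partial c}$, $\mathbb{1}=(1,\dots,1)^T\in\mathbb{R}^{n_c}$. ${\mathsf N}_c$ and ${\mathsf R}_c$ are the $n_c\times d$ matrices with entries $({\mathsf N}_c)_{f,i}={\bf n}_f\cdot{\mathbb K}_c{\bf e}_i$ and $({\mathsf R}_c)_{f,i}=\sigma_{c,f}|f|\,(x_{f,i}-x_{c,i})$, where ${\bf e}_i$ is the $i$-th coordinate vector and $x_{f,i},x_{c,i}$ are the $i$-th coordinates of ${\bf x}_f,{\bf x}_c$. *)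

(* Defs.v *)
From HB Require Import structures.
From mathcomp Require Import all_boot all_order all_algebra.
Set Implicit Arguments. Unset Strict Implicit. Unset Printing Implicit Defensive.
Import Order.TTheory GRing.Theory Num.Theory.
Local Open Scope ring_scope.

Definition symmx (R : realFieldType) (n : nat) (A : 'M[R]_n) : Prop := A^T = A.
Definition spdmx (R : realFieldType) (n : nat) (A : 'M[R]_n) : Prop :=
  A^T = A /\ forall v : 'cV[R]_n, v != 0 -> 0 < (v^T *m A *m v) 0 0.

Definition sqnorm (R : realFieldType) (n : nat) (v : 'cV[R]_n) : R := (v^T *m v) 0 0.

Definition ones (R : realFieldType) (n : nat) : 'cV[R]_n := const_mx 1.

Definition Fmat (R : realFieldType) (nc : nat) (area : 'I_nc -> R) : 'M[R]_nc :=
  diag_mx (\row_f area f).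
Definition Sigmat (R : realFieldType) (nc : nat) (sigma : 'I_nc -> R) : 'M[R]_nc :=
  diag_mx (\row_f sigma f).

Definition Nmat (R : realFieldType) (nc d : nat) (nf : 'I_nc -> 'rV[R]_d)
  (K : 'M[R]_d) : 'M[R]_(nc, d) :=
  \matrix_(f, i) (nf f *m K) 0 i.

Definition Rmat (R : realFieldType) (nc d : nat) (sigma area : 'I_nc -> R)
  (xf : 'I_nc -> 'rV[R]_d) (xc : 'rV[R]_d) : 'M[R]_(nc, d) :=
  \matrix_(f, i) (sigma f * area f * (xf f 0 i - xc 0 i)).

Definition linear_pair (R : realFieldType) (nc : nat)
  (L : R -> 'cV[R]_nc -> 'cV[R]_nc) : Prop :=
  forall (a b p p' : R) (lam lam' : 'cV[R]_nc),
    L (a * p + b * p') (a *: lam + b *: lam') = a *: L p lam + b *: L p' lam'.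

Definition lin_preserving (R : realFieldType) (nc d : nat)
  (L : R -> 'cV[R]_nc -> 'cV[R]_nc) (xc : 'rV[R]_d) (xf nf : 'I_nc -> 'rV[R]_d)
  (K : 'M[R]_d) : Prop :=
  forall (a : R) (g : 'cV[R]_d),
    L (a + (xc *m g) 0 0) (\col_f (a + (xf f *m g) 0 0))
    = \col_f (- (nf f *m K *m g) 0 0).

Definition Bform (R : realFieldType) (nc : nat) (sigma area : 'I_nc -> R)
  (L : R -> 'cV[R]_nc -> 'cV[R]_nc) (pt : R) (lamt : 'cV[R]_nc)
  (p : R) (lam : 'cV[R]_nc) : R :=
  (((pt *: ones R nc - lamt)^T *m Sigmat sigma *m Fmat area) *m L p lam) 0 0.

(* Main.v *)
Require Import Defs.
From HB Require Import structures.
From mathcomp Require Import all_boot all_order all_algebra.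
Import Order.TTheory GRing.Theory Num.Theory.
Local Open Scope ring_scope.

Lemma lin_rep (R : realFieldType) n (f : 'cV[R]_n -> 'cV[R]_n)
 (Hf : forall (a b : R) u v, f (a *: u + b *: v) = a *: f u + b *: f v) :
 forall w, f w = (\matrix_(i,j) f (delta_mx j 0) i 0) *m w.
Proof.
have f0 : f 0 = 0 by have := Hf 0 0 0 0; rewrite !scale0r addr0.
have fD : {morph f : x y / x + y >-> x + y}.
  by move=> x y; have := Hf 1 1 x y; rewrite !scale1r.
have fZ : forall a x, f (a *: x) = a *: f x.
  by move=> a x; have := Hf a 0 x 0; rewrite !scale0r !addr0.
move=> w; rewrite {1}(matrix_sum_delta w).
rewrite (big_morph f fD f0).
apply/matrixP => i k; rewrite ord1 summxE !mxE.
apply: eq_bigr => j _.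
rewrite big_ord1 fZ !mxE mulrC.
by [].
Qed.

Theorem mainTheorem2 (R : realFieldType) (d nc : nat)
  (xc : 'rV[R]_d) (xf nf : 'I_nc -> 'rV[R]_d)
  (area sigma : 'I_nc -> R) (vol : R) (K : 'M[R]_d)
  (L : R -> 'cV[R]_nc -> 'cV[R]_nc)
  (Hd : (d == 2%N) || (d == 3%N))
  (Hvol : 0 < vol)
  (Harea : forall f, 0 < area f)
  (Hsigma : forall f, sigma f = 1 \/ sigma f = -1)
  (Hnf : forall f, (nf f *m (nf f)^T) 0 0 = 1)
  (HK : spdmx K)
  (HLlin : linear_pair L)
  (HLP : lin_preserving L xc xf nf K) :
  exists W : 'M[R]_nc,
    ((forall (p : R) (lam : 'cV[R]_nc),
        L p lam = W *m Fmat area *m Sigmat sigma *m (p *: ones R nc - lam))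
     /\ W *m Rmat sigma area xf xc = Nmat nf K)
    /\
    ((forall pt lamt p lam,
        Bform sigma area L pt lamt p lam = Bform sigma area L p lam pt lamt) ->
     (forall p lam, p *: ones R nc != lam -> 0 < Bform sigma area L p lam p lam) ->
     spdmx W /\ W \in unitmx /\ spdmx (invmx W)
     /\ invmx W *m Nmat nf K = Rmat sigma area xf xc
     /\ (forall C1 C2 : R, 0 < C1 -> C1 <= C2 ->
          (forall p lam,
             C1 * vol * sqnorm (L p lam) <= Bform sigma area L p lam p lam
             /\ Bform sigma area L p lam p lam <= C2 * vol * sqnorm (L p lam)) ->
          forall v : 'cV[R]_nc,
            C1 * vol * sqnorm v <= (v^T *m invmx W *m v) 0 0
            /\ (v^T *m invmx W *m v) 0 0 <= C2 * vol * sqnorm v)).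
Proof.
Proof.
set D := Fmat area *m Sigmat sigma.
have Hlin0 : forall (a b : R) u v, L 0 (a *: u + b *: v) = a *: L 0 u + b *: L 0 v.
  by move=> a b u v; have := HLlin a b 0 0 u v; rewrite !mulr0 addr0.
set G := \matrix_(i,j) L 0 (delta_mx j 0) i 0.
have HG : forall w, L 0 w = G *m w := @lin_rep R nc (L 0) Hlin0.
have Hconst : forall p, L p (p *: ones R nc) = 0.
  move=> p; have H := HLP p 0; rewrite mulmx0 mxE addr0 in H.
  rewrite (_ : \col_f (p + (xf f *m 0) 0 0) = p *: ones R nc) in H; last first.
    by apply/matrixP => i j; rewrite mxE mulmx0 !mxE addr0 mulr1.
  rewrite H; apply/matrixP => i j; rewrite mxE mulmx0 !mxE oppr0.
  by [].
have HL : forall p lam, L p lam = - G *m (p *: ones R nc - lam).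
  move=> p lam.
  have := HLlin 1 1 p 0 (p *: ones R nc) (lam - p *: ones R nc).
  rewrite mulr0 addr0 mul1r !scale1r addrC subrK => ->.
  by rewrite Hconst add0r HG mulNmx -mulmxN opprB.
have Hnz : forall f, area f != 0 /\ sigma f != 0.
  move=> f; split; first by rewrite gt_eqF.
  by case: (Hsigma f) => ->; rewrite ?oppr_eq0 oner_eq0.
have FU : Fmat area \in unitmx.
  rewrite unitmxE det_diag unitfE; apply/prodf_neq0 => i _; rewrite mxE.
  by case: (Hnz i).
have SU : Sigmat sigma \in unitmx.
  rewrite unitmxE det_diag unitfE; apply/prodf_neq0 => i _; rewrite mxE.
  by case: (Hnz i).
have DU : D \in unitmx by rewrite unitmx_mul FU SU.
have SFU : Sigmat sigma *m Fmat area \in unitmx by rewrite unitmx_mul FU SU.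
set W := - G *m invmx D.
have HWD : W *m Fmat area *m Sigmat sigma = - G.
  by rewrite -(mulmxA W) mulmxKV.
set X := \matrix_(f, i) (xf f 0 i - xc 0 i) : 'M[R]_(nc, d).
have RDX : Rmat sigma area xf xc = D *m X.
  apply/matrixP => f i.
  by rewrite /D -mulmxA /Fmat /Sigmat !mul_diag_mx !mxE mulrA [area f * _]mulrC.
have GX : G *m X = - Nmat nf K.
  apply/matrixP => f i.
  have key := HLP (-(xc *m (delta_mx i 0 : 'cV[R]_d)) 0 0) (delta_mx i 0).
  rewrite addNr in key.
  rewrite (_ : \col_f0 (- (xc *m delta_mx i 0) 0 0 + (xf f0 *m delta_mx i 0) 0 0)
     = col i X) in key; last first.
    by apply/matrixP => a b; rewrite mxE -[xf a *m _]colE -[xc *m _]colE !mxE addrC.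
  have -> : (G *m X) f i = (G *m col i X) f 0 by rewrite colE mulmxA -colE [RHS]mxE.
  rewrite -HG key mxE -colE !mxE.
  by [].
have WR : W *m Rmat sigma area xf xc = Nmat nf K.
  by rewrite RDX mulmxA /D mulmxA HWD mulNmx GX opprK.
have HL0 : forall u, L 0 (-(invmx D *m u)) = W *m u.
  by move=> u; rewrite HL scale0r sub0r opprK /W -mulmxA.
have HDT : D^T = Sigmat sigma *m Fmat area.
  by rewrite /D trmx_mul /Fmat /Sigmat !tr_diag_mx.
have HB : forall ut u, Bform sigma area L 0 (-(invmx D *m ut)) 0 (-(invmx D *m u))
     = (ut^T *m W *m u) 0 0.
  move=> ut u; rewrite /Bform HL0 scale0r sub0r opprK trmx_mul trmx_inv HDT.
  rewrite -!mulmxA [Sigmat sigma *m (Fmat area *m _)]mulmxA mulKmx //.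
exists W; split; first split.
- by move=> p lam; rewrite HWD HL.
- exact: WR.
move=> Hsym Hpos.
have Hent : forall i j : 'I_nc, ((delta_mx i 0 : 'cV[R]_nc)^T *m W *m (delta_mx j 0 : 'cV[R]_nc)) 0 0 = W i j.
  by move=> i j; rewrite trmx_delta -rowE -colE !mxE.
have WT : W^T = W.
  apply/matrixP => i j; rewrite mxE.
  have := Hsym 0 (-(invmx D *m (delta_mx i 0 : 'cV[R]_nc))) 0 (-(invmx D *m (delta_mx j 0 : 'cV[R]_nc))).
  by rewrite !HB !Hent => ->.
have Wpos : forall u : 'cV[R]_nc, u != 0 -> 0 < (u^T *m W *m u) 0 0.
  move=> u Hu; rewrite -(HB u u); apply: Hpos.
  rewrite scale0r eq_sym oppr_eq0; apply: contra Hu => /eqP H.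
  by rewrite -(mulKVmx DU u) H mulmx0.
have WU : W \in unitmx.
  rewrite -row_free_unit -kermx_eq0.
  apply/eqP/row_matrixP => i; rewrite row0; apply/eqP; apply/negPn/negP => Hr.
  have Hp := Wpos (row i (kermx W))^T.
  rewrite trmxK -row_mul mulmx_ker row0 mul0mx mxE ltxx in Hp.
  suff H0 : (row i (kermx W))^T != 0 by have := Hp H0.
  apply: contra Hr => /eqP H; apply/eqP.
  by rewrite -(trmxK (row i _)) H trmx0.
have Hinv : forall v : 'cV[R]_nc, (v^T *m invmx W *m v) 0 0
    = ((invmx W *m v)^T *m W *m (invmx W *m v)) 0 0.
  by move=> v; rewrite trmx_mul trmx_inv WT mulmxKV // mulmxA.
split; first by split.
split; first exact: WU.
split.
  split; first by rewrite trmx_inv WT.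
  move=> v Hv; rewrite Hinv; apply: Wpos.
  apply: contra Hv => /eqP H; by rewrite -(mulKVmx WU v) H mulmx0.
split; first by rewrite -WR mulKmx.
move=> C1 C2 _ _ HC v.
have := HC 0 (-(invmx D *m (invmx W *m v))).
by rewrite HB HL0 mulKVmx // -Hinv.
Qed.
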